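(* For every $t=0,1,\dots,T-1$, $S^*_t\le S^U_t$.
   Context: Model. Fix an integer horizon $T\ge 2$, a discount factor $\alpha\in(0,1]$, and for $t=0,\dots,T-1$: unit ordering costs $c_t\in\mathbb R$, a salvage coefficient $c_T\in\mathbb R$, setup costs $K_t\ge 0$, functions $G_t:\mathbb R\to\mathbb R$, and independent nonnegative random demands $D_0,\dots,D_{T-1}$ with right-continuous distribution functions $F_t$ and finite means; all expectations appearing are assumed finite. Let $\delta(z)=1$ for $z>0$, $\delta(0)=0$. Put $C_t(y)=(c_t-\alpha c_{t+1})y+G_t(y)+\alpha c_{t+1}E[D_t]$. Standing assumptions: (i) each $C_t$ is convex with $C_t(y)\to+\infty$ as $|y|\to\infty$; (ii) $K_t\ge \alpha K_{t+1}$ for $t=0,\dots,T-2$. Let $V^*_T\equiv 0$, and for $t=T-1,\dots,0$: $H^*_t(y)=C_t(y)+\alpha E[V^*_{t+1}(y-D_t)]$, $V^*_t(x)=\min_{y\ge x}\{K_t\delta(y-x)+H^*_t(y)\}$, and $S^*_t=\min\{x: H^*_t(x)=\min_{y\in\mathbb R}H^*_t(y)\}$. Fix $\theta>0$, $z_m=m\theta$, $Z_\theta=\{z_m:m\in\mathbb Z\}$. Let $C^m_t=\min\{y: C_t(y)=\min_x C_t(x)\}$; with $n_0$ the integer such that $z_{n_0}<C^m_t\le z_{n_0+1}$, let $S^U_t=\min\{z_m\in Z_\theta: z_m\ge C^m_t,\ C_t(z_m)>C_t(z_{n_0})+K_t\}$. *)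

(* Defs.v *)
From HB Require Import structures.
From mathcomp Require Import all_boot all_order all_algebra.
From mathcomp Require Import all_classical all_reals all_analysis.
Set Implicit Arguments. Unset Strict Implicit. Unset Printing Implicit Defensive.
Import Order.TTheory GRing.Theory Num.Theory.
Import numFieldNormedType.Exports.
Local Open Scope classical_set_scope.
Local Open Scope ring_scope.

Section InventoryModel.
Context {R : realType} {d : measure_display} {Omega : measurableType d}.
Variable (P : probability Omega R).

(* Expectation of a real random quantity (meaningful when integrable). *)
Definition Exp (X : Omega -> R) : R := fine (\int[P]_w (X w)%:E).

Definition demands_independent (T : nat) (D : nat -> {RV P >-> R}) : Prop :=
  forall s : seq nat, uniq s -> (forall i, i \in s -> (i < T)%N) ->
  forall B : nat -> set R, (forall i, measurable (B i)) ->
  P (\bigcap_(i in [set` s]) (D i @^-1` B i)) =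
  (\prod_(i <- s) P (D i @^-1` B i))%E.

Variables (T : nat) (alpha : R) (c K : nat -> R) (G : nat -> R -> R)
  (D : nat -> {RV P >-> R}).

Definition delta (z : R) : R := if 0 < z then 1 else 0.

Definition Cfun (t : nat) (y : R) : R :=
  (c t - alpha * c t.+1) * y + G t y + alpha * c t.+1 * Exp (D t).

(* Backward recursion indexed by the number k of remaining periods,
   i.e. Vrem k = V*_{T-k}; Vrem 0 = V*_T = 0.  The "min" is rendered by inf. *)
Fixpoint Vrem (k : nat) : R -> R :=
  match k with
  | 0 => fun _ => 0
  | k'.+1 => fun x =>
      let t := (T - k'.+1)%N in
      inf [set K t * delta (y - x) +
               (Cfun t y + alpha * Exp (fun w => Vrem k' (y - D t w)))
          | y in [set y | x <= y]]
  end.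

Definition Vstar (t : nat) : R -> R := Vrem (T - t).

Definition Hstar (t : nat) (y : R) : R :=
  Cfun t y + alpha * Exp (fun w => Vstar t.+1 (y - D t w)).

Definition Sstar (t : nat) : R :=
  inf [set x | Hstar t x = inf (range (Hstar t))].

Definition Cm (t : nat) : R :=
  inf [set y | Cfun t y = inf (range (Cfun t))].

Definition zgrid (theta : R) (m : int) : R := m%:~R * theta.

Definition SU (theta : R) (t : nat) : R :=
  inf [set zgrid theta m | m in
        [set m : int | Cm t <= zgrid theta m /\
           exists n0 : int,
             zgrid theta n0 < Cm t <= zgrid theta (n0 + 1) /\
             Cfun t (zgrid theta n0) + K t < Cfun t (zgrid theta m)]].

End InventoryModel.

Definition convex_fun {R : realType} (f : R -> R) : Prop :=
  forall x y l : R, 0 <= l <= 1 ->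
    f (l * x + (1 - l) * y) <= l * f x + (1 - l) * f y.

Definition coercive {R : realType} (f : R -> R) : Prop :=
  forall M : R, exists N : R, forall y : R, N <= `|y| -> M <= f y.

(* Main.v *)
Require Import Defs.
From HB Require Import structures.
From mathcomp Require Import all_boot all_order all_algebra.
From mathcomp Require Import all_classical all_reals all_analysis.
From mathcomp Require Import ring lra zify.
Set Implicit Arguments. Unset Strict Implicit. Unset Printing Implicit Defensive.
Import Order.TTheory GRing.Theory Num.Theory.
Import numFieldNormedType.Exports.
Local Open Scope classical_set_scope.
Local Open Scope ring_scope.



Section Inf.
Context {R : realType}.
Lemma inf_le_elem (E : set R) L x : (forall y, E y -> L <= y) -> E x -> inf E <= x.
Proof. by move=> hL Ex; apply: ge_inf => //; exists L => y /hL. Qed.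
Lemma le_inf_lb (E : set R) L x : (forall y, E y -> L <= y) -> E x -> L <= inf E.
Proof. by move=> hL Ex; apply: lb_le_inf => //; exists x. Qed.
Lemma inf_min (E : set R) x : (forall y, E y -> x <= y) -> E x -> inf E = x.
Proof.
move=> hL Ex; apply/eqP; rewrite eq_le; apply/andP; split.
  exact: (inf_le_elem hL Ex).
exact: (le_inf_lb hL Ex).
Qed.
End Inf.

Definition ucc {R : realType} (f : R -> R) := forall a b e, 0 < e -> exists2 dl, 0 < dl &
  forall x y, a <= x <= b -> a <= y <= b -> `|x - y| < dl -> `|f x - f y| < e.
Definition ucl {R : realType} (f : R -> R) := forall b e, 0 < e -> exists2 dl, 0 < dl &
  forall x y, x <= b -> y <= b -> `|x - y| < dl -> `|f x - f y| < e.

Lemma delta_pos {R : realType} (z : R) : 0 < z -> delta z = 1.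
Proof. by rewrite /delta => ->. Qed.
Lemma delta_0 {R : realType} : delta (0 : R) = 0.
Proof. by rewrite /delta ltxx. Qed.
Lemma delta_mono {R : realType} (z z' : R) : z <= z' -> delta z <= delta z'.
Proof.
rewrite /delta => zz; case: ifP => hz; case: ifP => hz' //; try lra; by move: hz'; rewrite (lt_le_trans hz zz).
Qed.

Lemma ucc_ucl {R : realType} (V : R -> R) a c :
  ucc V -> (forall x, x <= a -> V x = c) -> ucl V.
Proof.
move=> uV hc b e e0.
have [dl dl0 hdl] := uV (a - 1) (Num.max a b) e e0.
exists (Num.min dl 1); first by rewrite lt_min dl0 ltr01.
move=> x y xb yb; rewrite lt_min => /andP[h1 h2].
have hxb : x <= Num.max a b by rewrite le_max xb orbT.
have hyb : y <= Num.max a b by rewrite le_max yb orbT.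
move: (h2); rewrite ltr_norml => /andP[h3 h4].
have [xa|xa] := leP x a; have [ya|ya] := leP y a.
- by rewrite (hc x xa) (hc y ya) subrr normr0.
- by apply: hdl => //; apply/andP; split => //; lra.
- by apply: hdl => //; apply/andP; split => //; lra.
- by apply: hdl => //; apply/andP; split => //; lra.
Qed.

Section VF.
Context {R : realType}.
Variables (H : R -> R) (K : R) (Lh : R).
Hypothesis K0 : 0 <= K.
Hypothesis HL : forall y, Lh <= H y.

Definition Vf (x : R) : R :=
  inf [set K * delta (y - x) + H y | y in [set y | x <= y]].

Lemma delta01 (z : R) : 0 <= delta z <= 1.
Proof. rewrite /delta; case: ifP => _; apply/andP; split; lra. Qed.

Lemma Vf_elemlb x : forall v, [set K * delta (y - x) + H y | y in [set y | x <= y]] v -> Lh <= v.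
Proof.
move=> v [y /= xy <-]; have /andP[d0 d1] := delta01 (y - x).
have := HL y; have := mulr_ge0 K0 d0; lra.
Qed.

Lemma Vf_lb x : Lh <= Vf x.
Proof. apply: le_inf_lb (Vf_elemlb (x:=x)) _; exists x => //=. Qed.

Lemma Vf_le x y : x <= y -> Vf x <= K * delta (y - x) + H y.
Proof. move=> xy; apply: inf_le_elem (Vf_elemlb (x:=x)) _; by exists y. Qed.

Lemma Vf_ge x v : (forall y, x <= y -> v <= K * delta (y - x) + H y) -> v <= Vf x.
Proof.
move=> h; apply: lb_le_inf; first by exists (K * delta (x - x) + H x), x => //=.
by move=> _ [y /= xy <-]; exact: h.
Qed.

Lemma Vf_mono x x' : x <= x' -> Vf x <= K + Vf x'.
Proof.
move=> xx'; rewrite addrC -lerBlDr; apply: Vf_ge => y x'y.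
rewrite lerBlDr; apply: (le_trans (Vf_le (le_trans xx' x'y))).
have /andP[d0 d1] := delta01 (y - x); have /andP[e0 e1] := delta01 (y - x').
have := mulr_ge0 K0 e0; have := ler_wpM2l K0 d1; lra.
Qed.


Lemma Vf_left s : (forall y, H s <= H y) -> coercive H ->
  exists a, forall x, x <= a -> Vf x = K + H s.
Proof.
move=> hs co; have [N HN] := co (K + H s + 1).
exists (Num.min (- `|N|) s - 1) => x xa.
have xs : x < s by move: xa; rewrite lerBrDr le_min => /andP[_]; lra.
have Nx : N <= `|x|.
  move: xa; rewrite lerBrDr le_min => /andP[h _].
  have -> : `|x| = - x by rewrite ltr0_norm //; have := normr_ge0 N; lra.
  have := ler_norm N; lra.
apply/eqP; rewrite eq_le; apply/andP; split.
  by have := Vf_le (ltW xs); rewrite delta_pos ?subr_gt0 // mulr1.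
apply: Vf_ge => y xy; have [xy'|xy'|<-] := ltgtP x y.
- by rewrite delta_pos ?subr_gt0 // mulr1 lerD2l.
- by move: xy; rewrite leNgt xy'.
- by rewrite subrr delta_0 mulr0 add0r; have := HN x Nx; lra.
Qed.

Lemma Vf_ucc : ucc H -> ucc Vf.
Proof.
move=> uH.
suff key : forall a b e, 0 < e -> exists2 dl, 0 < dl & forall x x', a <= x <= b -> a <= x' <= b ->
   x <= x' -> `|x - x'| < dl -> `|Vf x - Vf x'| <= e / 2.
  move=> a b e e0; have [dl dl0 hdl] := key a b e e0.
  exists dl => // x y hx hy hxy.
  have [xy|yx] := leP x y.
    by apply: (le_lt_trans (hdl x y hx hy xy hxy)); lra.
  rewrite distrC; rewrite distrC in hxy.
  by apply: (le_lt_trans (hdl y x hy hx (ltW yx) hxy)); lra.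
move=> a b e e0.
have e20 : 0 < e / 2 by lra.
have [dl dl0 hdl] := uH a b _ e20.
exists dl => // x x' hx hx' xx' hxx'.
have hHxx' : `|H x - H x'| < e / 2 by exact: hdl.
move: (hHxx'); rewrite ltr_norml => /andP[hH1 hH2].
have b1 : Vf x - e / 2 <= Vf x'.
  apply: Vf_ge => y x'y; have [x'y'|x'y'|<-] := ltgtP x' y.
  - rewrite delta_pos ?subr_gt0 // mulr1.
    have := Vf_le (le_trans xx' x'y); rewrite delta_pos ?subr_gt0 ?(le_lt_trans xx' x'y') // mulr1.
    lra.
  - by move: x'y; rewrite leNgt x'y'.
  - rewrite subrr delta_0 mulr0 add0r.
    have := Vf_le (lexx x); rewrite subrr delta_0 mulr0 add0r; lra.
have b2 : Vf x' - e / 2 <= Vf x.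
  apply: Vf_ge => y xy; have [x'y|yx'] := leP x' y.
  - have := Vf_le x'y.
    have /andP[d0 d1] := delta01 (y - x').
    have := ler_wpM2l K0 (delta_mono (lerB (lexx y) xx')); lra.
  - have := Vf_le (lexx x'); rewrite subrr delta_0 mulr0 add0r => hV.
    have hy : a <= y <= b.
      move: hx hx' => /andP[] ? ? /andP[] ? ?; apply/andP; split; lra.
    have hyx' : `|y - x'| < dl.
      apply: le_lt_trans hxx'; rewrite !ler0_norm; try lra.
    have := hdl y x' hy hx' hyx'; rewrite ltr_norml => /andP[h1 h2].
    have /andP[d0 d1] := delta01 (y - x).
    have := mulr_ge0 K0 d0; lra.
rewrite ler_norml; apply/andP; split; lra.
Qed.

End VF.


Section Conv.
Context {R : realType}.
Implicit Types f : R -> R.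

Lemma chord f x y z : convex_fun f -> x < z -> x <= y <= z ->
  f y <= (z - y) / (z - x) * f x + (y - x) / (z - x) * f z.
Proof.
move=> cf xz /andP[xy yz].
have zx0 : z - x != 0 by rewrite subr_eq0 gt_eqF.
have zxp : 0 < z - x by rewrite subr_gt0.
set l := (z - y) / (z - x).
have l0 : 0 <= l by apply: divr_ge0; lra.
have l1 : l <= 1 by rewrite ler_pdivrMr // mul1r; lra.
have hl : 0 <= l <= 1 by rewrite l0 l1.
have := cf x z l hl.
have -> : l * x + (1 - l) * z = y by rewrite /l; field.
have -> : 1 - l = (y - x) / (z - x) by rewrite /l; field.
by [].
Qed.

Lemma conv_lb f : convex_fun f -> coercive f -> exists L, forall y, L <= f y.
Proof.
move=> cf co; have [N HN] := co 0.
pose N' : R := `|N| + 1.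
have N'0 : 0 < N' by rewrite /N'; have := normr_ge0 N; lra.
pose U : R := `|f (- N')| + `|f N'|.
have hU : forall u, `|u| <= N' -> f u <= U.
  move=> u hu.
  have hu' : - N' <= u <= N' by rewrite -ler_norml.
  have hN : - N' < N' by lra.
  have h := @chord f (-N') u N' cf hN hu'; apply: (le_trans h).
  have a0 : 0 <= (N' - u) / (N' - - N') by apply: divr_ge0; lra.
  have b0 : 0 <= (u - - N') / (N' - - N') by apply: divr_ge0; lra.
  have ab : (N' - u) / (N' - - N') + (u - - N') / (N' - - N') = 1.
    by field; rewrite gt_eqF //; lra.
  have h1 : f (- N') <= `|f (- N')| := ler_norm _.
  have h2 : f N' <= `|f N'| := ler_norm _.
  have n1 := normr_ge0 (f (- N')); have n2 := normr_ge0 (f N').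
  rewrite /U; nra.
exists (Num.min 0 (2 * f 0 - U)) => y.
have [Ny|Ny] := leP N `|y|.
  by rewrite ge_min HN.
rewrite ge_min; apply/orP; right.
have hy : `|- y| <= N'.
  rewrite normrN /N'; have := ler_norm N; lra.
have := hU _ hy.
have hl : 0 <= (1/2 : R) <= 1 by apply/andP; split; lra.
have := cf y (- y) (1/2) hl.
have -> : 1 / 2 * y + (1 - 1 / 2) * - y = 0 by field.
lra.
Qed.

Lemma conv_lip f Lc : convex_fun f -> (forall y, Lc <= f y) -> forall a b,
  exists M, 0 <= M /\ forall x y, a <= x <= b -> a <= y <= b ->
    `|f x - f y| <= M * `|x - y|.
Proof.
move=> cf hL a b.
exists ((f (b+1) - Lc) + (f (a-1) - Lc)); split.
  have := hL (b+1); have := hL (a-1); lra.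
have key : forall x y, a <= x <= b -> a <= y <= b -> x < y ->
    `|f x - f y| <= ((f (b+1) - Lc) + (f (a-1) - Lc)) * `|x - y|.
  move=> x y /andP[ax xb] /andP[ay yb] xy.
  have e1 : `|x - y| = y - x by rewrite distrC ger0_norm // subr_ge0 ltW.
  rewrite e1.
  have hxz : x < b + 1 by lra.
  have hxy : x <= y <= b + 1 by apply/andP; split; lra.
  have c1 := @chord f x y (b+1) cf hxz hxy.
  have hwz : a - 1 < y by lra.
  have hxy2 : a - 1 <= x <= y by apply/andP; split; lra.
  have c2 := @chord f (a-1) x y cf hwz hxy2.
  have l2le : (y - x) / (b + 1 - x) <= y - x.
    rewrite ler_pdivrMr; last lra.
    nra.
  have l2ge : 0 <= (y - x) / (b + 1 - x) by apply: divr_ge0; lra.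
  have l1e : (b + 1 - y) / (b + 1 - x) = 1 - (y - x) / (b + 1 - x).
    by field; rewrite gt_eqF //; lra.
  have m1le : (y - x) / (y - (a - 1)) <= y - x.
    rewrite ler_pdivrMr; last lra.
    nra.
  have m1ge : 0 <= (y - x) / (y - (a - 1)) by apply: divr_ge0; lra.
  have m2e : (x - (a - 1)) / (y - (a - 1)) = 1 - (y - x) / (y - (a - 1)).
    by field; rewrite gt_eqF //; lra.
  rewrite l1e in c1; rewrite m2e in c2.
  have hb := hL (b+1); have ha := hL (a - 1); have hx := hL x; have hy := hL y.
  rewrite ler_norml; apply/andP; split.
    set l := (y - x) / (b + 1 - x) in c1 l2le l2ge *.
    nra.
  set m := (y - x) / (y - (a - 1)) in c2 m1le m1ge *.
  nra.
move=> x y hx hy.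
have [xy|yx|<-] := ltgtP x y.
- exact: key.
- by rewrite distrC (distrC x); exact: key.
- rewrite !subrr normr0 mulr0 //.
Qed.

Lemma conv_ucc f : convex_fun f -> coercive f -> ucc f.
Proof.
move=> cf co; have [Lc hL] := @conv_lb f cf co.
move=> a b e e0.
have [M [M0 HM]] := @conv_lip f Lc cf hL a b.
exists (e / (M + 1)); first by apply: divr_gt0; lra.
move=> x y hx hy hxy.
apply: (le_lt_trans (HM x y hx hy)).
rewrite ltr_pdivlMr in hxy; last lra.
have := normr_ge0 (x - y); nra.
Qed.

End Conv.


Section ExpLemmas.
Context {R : realType} {d : measure_display} {Omega : measurableType d}.
Variable (P : probability Omega R).

Lemma Exp_cst (k : R) : Exp P (fun _ => k) = k.
Proof.
rewrite /Exp integral_cst //= probability_setT mule1 //.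
Qed.

Lemma Exp_le (f g : Omega -> R) (e : R) :
  P.-integrable setT (EFin \o f) -> P.-integrable setT (EFin \o g) ->
  (forall w, f w <= g w + e) -> Exp P f <= Exp P g + e.
Proof.
move=> If Ig fg.
have Ic := finite_measure_integrable_cst P e (@measurableT _ Omega).
have h : (\int[P]_w (f w)%:E <= \int[P]_w ((g w)%:E + (cst e w)%:E))%E.
  apply: le_integral => //.
    exact: (integrableD measurableT Ig Ic).
  by move=> w _; rewrite /= -EFinD lee_fin.
rewrite integralD // in h.
have ce : (\int[P]_w (cst e w)%:E = e%:E)%E.
  rewrite (integral_cst P (@measurableT _ Omega) e%:E). rewrite [X in (_ * X)%E](_ : _ = 1%E) ?mule1 //; exact: probability_setT.
rewrite ce in h.
have := integrable_fin_num measurableT If; have := integrable_fin_num measurableT Ig.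
rewrite /Exp; move: h.
move: (\int[P]_w (f w)%:E)%E (\int[P]_w (g w)%:E)%E => A B.
by case: A => [a| |]; case: B => [b| |] //=.
Qed.

Lemma Exp_ge (f : Omega -> R) (L : R) :
  P.-integrable setT (EFin \o f) -> (forall w, L <= f w) -> L <= Exp P f.
Proof.
move=> If fL.
have := @Exp_le (fun _ => L) f 0 (finite_measure_integrable_cst P L (@measurableT _ Omega)) If.
rewrite Exp_cst addr0; apply => w; rewrite addr0; exact: fL.
Qed.

Variables (Dt : Omega -> R) (V : R -> R).
Hypothesis Dge : forall w, 0 <= Dt w.
Hypothesis Int : forall y, P.-integrable setT (fun w => (V (y - Dt w))%:E).

Definition Wf y := Exp P (fun w => V (y - Dt w)).

Lemma W_lb LV : (forall x, LV <= V x) -> forall y, LV <= Wf y.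
Proof. by move=> hV y; apply: Exp_ge; [exact: Int | move=> w; exact: hV]. Qed.

Lemma W_mono K' : (forall x x', x <= x' -> V x <= K' + V x') ->
  forall z y, z <= y -> Wf z <= K' + Wf y.
Proof.
move=> hV z y zy; rewrite addrC; apply: Exp_le; [exact: Int|exact: Int|move=> w].
rewrite [_ + K']addrC; apply: hV; lra.
Qed.

Lemma W_ucc : ucl V -> ucc Wf.
Proof.
move=> uV a b e e0.
have e20 : 0 < e / 2 by lra.
have [dl dl0 hdl] := uV b _ e20.
exists dl => // y y' /andP[ay yb] /andP[ay' yb'] hyy.
have pt : forall u u', u <= b -> u' <= b -> `|u - u'| < dl ->
    Wf u <= Wf u' + e / 2.
  move=> u u' ub u'b huu; apply: Exp_le; [exact: Int|exact: Int|move=> w].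
  have hw := Dge w.
  have h : `|(u - Dt w) - (u' - Dt w)| < dl.
    by have -> : (u - Dt w) - (u' - Dt w) = u - u' by ring.
  have := hdl (u - Dt w) (u' - Dt w); move=> /(_ _ _ h).
  have h1 : u - Dt w <= b by lra.
  have h2 : u' - Dt w <= b by lra.
  move=> /(_ h1 h2); rewrite ltr_norml; lra.
have := pt y y' yb yb' hyy.
have := pt y' y yb' yb ltac:(by rewrite distrC).
rewrite ltr_norml; lra.
Qed.
End ExpLemmas.


Lemma ucc_cont {R : realType} (f : R -> R) : ucc f -> continuous f.
Proof.
move=> uf x; apply/cvgrPdist_lt => e e0.
have [dl dl0 hdl] := uf (x - 1) (x + 1) e e0.
apply/nbhs_ballP; exists (Num.min dl 1); first by rewrite /= lt_min dl0 ltr01.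
move=> y; rewrite /ball /= lt_min => /andP[h1 h2].
move: (h2); rewrite ltr_norml => /andP[h3 h4].
apply: hdl => //; apply/andP; split; lra.
Qed.

Lemma attain {R : realType} (f : R -> R) : continuous f -> coercive f ->
  exists s, forall y, f s <= f y.
Proof.
move=> cf co; have [N HN] := co (f 0 + 1).
have hN : - `|N| <= `|N| by have := normr_ge0 N; lra.
have [c hc hmin] := EVT_min hN (continuous_subspaceT cf).
exists c => y.
have [Ny|Ny] := leP N `|y|.
  have := HN y Ny; have := hmin 0.
  rewrite in_itv /= normr_ge0 oppr_le0 normr_ge0 => /(_ isT); lra.
apply: hmin; rewrite in_itv /= -ler_norml; apply: ltW; apply: (lt_le_trans Ny).
exact: ler_norm.
Qed.

Section HComp.
Context {R : realType}.
Variables (C W : R -> R) (alpha LW : R).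
Hypotheses (cC : convex_fun C) (coC : coercive C) (a0 : 0 <= alpha)
  (hW : forall y, LW <= W y) (uW : ucc W).

Let Hf y := C y + alpha * W y.

Lemma Hf_lb : exists L, forall y, L <= Hf y.
Proof.
have [Lc hL] := conv_lb cC coC.
exists (Lc + alpha * LW) => y; rewrite /Hf.
have := hL y; have := ler_wpM2l a0 (hW y); lra.
Qed.

Lemma Hf_coer : coercive Hf.
Proof.
move=> M; have [N HN] := coC (M - alpha * LW).
exists N => y Ny; rewrite /Hf.
have := HN y Ny; have := ler_wpM2l a0 (hW y); lra.
Qed.

Lemma Hf_ucc : @ucc R Hf.
Proof.
move=> a b e e0.
have e20 : 0 < e / 2 by lra.
have [d1 d10 h1] := conv_ucc cC coC a b e20.
have ea1 : 0 < alpha + 1 by move: a0; lra.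
have ea0 : 0 < e / 2 / (alpha + 1) by apply: divr_gt0.
have [d2 d20 h2] := uW a b ea0.
exists (Num.min d1 d2); first by rewrite lt_min d10 d20.
move=> x y hx hy; rewrite lt_min => /andP[hd1 hd2].
have c1 := h1 x y hx hy hd1.
have c2 := h2 x y hx hy hd2.
rewrite /Hf.
have -> : C x + alpha * W x - (C y + alpha * W y) = (C x - C y) + alpha * (W x - W y) by ring.
apply: (le_lt_trans (ler_normD _ _)).
rewrite normrM ger0_norm //.
have : alpha * `|W x - W y| <= e / 2.
  rewrite ltr_pdivlMr in c2; last lra.
  set n := `|W x - W y| in c2 *.
  have hn : 0 <= n by exact: normr_ge0.
  have : alpha * n <= n * (alpha + 1) by nra.
  lra.
lra.
Qed.

Lemma Hf_min : exists s, forall y, Hf s <= Hf y.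
Proof. exact: attain (ucc_cont Hf_ucc) Hf_coer. Qed.

End HComp.

Lemma conv_mid {R : realType} (f : R -> R) x y z : convex_fun f -> x < y -> y < z ->
  f x < f y -> f y <= f z.
Proof.
move=> cf xy yz fxy.
have xz : x < z by apply: lt_trans xy yz.
have hy : x <= y <= z by rewrite !ltW.
have := chord cf xz hy.
set l1 := (z - y) / (z - x); set l2 := (y - x) / (z - x).
have l10 : 0 <= l1 by apply: divr_ge0; lra.
have l20 : 0 < l2 by apply: divr_gt0; lra.
have l12 : l1 + l2 = 1 by rewrite /l1 /l2; field; rewrite gt_eqF //; lra.
move=> h; rewrite leNgt; apply/negP => fzy.
have h1 : l1 * f x <= l1 * f y by apply: ler_wpM2l => //; exact: ltW.
have h2 : l2 * f z < l2 * f y by rewrite ltr_pM2l.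
have : f y < (l1 + l2) * f y by rewrite mulrDl; lra.
rewrite l12 mul1r; lra.
Qed.

Section Main.
Context {R : realType} {d : measure_display} {Omega : measurableType d}.
Variables (P : probability Omega R) (T : nat) (alpha : R) (c K : nat -> R)
  (G : nat -> R -> R) (D : nat -> {RV P >-> R}) (theta : R).

Local Notation Hs := (Hstar T alpha c K G D).
Local Notation Vs := (Vstar T alpha c K G D).
Local Notation Cf := (Cfun alpha c G D).

Lemma V_unfold t : (t.+1 < T)%N -> forall x, Vs t.+1 x = Vf (Hs t.+1) (K t.+1) x.
Proof.
move=> tT x; rewrite /Vstar /Vf /Hstar /Vstar.
have e1 : (T - t.+1 = (T - t.+2).+1)%N by lia.
rewrite e1 /=.
have e2 : (T - (T - t.+2).+1 = t.+1)%N by lia.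
by rewrite e2.
Qed.

Lemma V_last x : Vs T x = 0.
Proof. by rewrite /Vstar subnn. Qed.


Hypotheses (a01 : 0 < alpha <= 1) (K0 : forall t, (t < T)%N -> 0 <= K t)
  (Kdec : forall t, (t.+1 < T)%N -> alpha * K t.+1 <= K t)
  (Dge : forall t, (t < T)%N -> forall w, 0 <= D t w)
  (Vint : forall t, (t < T)%N -> forall y : R,
     P.-integrable setT (fun w => (Vs t.+1 (y - D t w))%:E))
  (Cconv : forall t, (t < T)%N -> convex_fun (Cf t) /\ coercive (Cf t)).

Definition Hgood t := (exists L, forall y, L <= Hs t y) /\ coercive (Hs t) /\
  ucc (Hs t) /\ (exists s, forall y, Hs t s <= Hs t y).
Definition Vgood t := (exists LV, forall x, LV <= Vs t.+1 x) /\
  (exists K', 0 <= K' /\ alpha * K' <= K t /\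
     forall x x', x <= x' -> Vs t.+1 x <= K' + Vs t.+1 x') /\ ucl (Vs t.+1).

Lemma Vgood_last t : t.+1 = T -> (t < T)%N -> Vgood t.
Proof.
move=> tT tlt; rewrite /Vgood tT.
split; first by exists 0 => x; rewrite V_last.
split.
  exists 0; split => //; split; first by rewrite mulr0 K0.
  by move=> x x' _; rewrite !V_last addr0.
move=> b e e0; exists 1 => // x y _ _ _; by rewrite !V_last subrr normr0.
Qed.

Lemma Vgood_of_Hgood t : (t.+1 < T)%N -> Hgood t.+1 -> Vgood t.
Proof.
move=> tT [[L HL] [co [uH [s hs]]]].
have K0' : 0 <= K t.+1 by exact: K0.
have eV : Vs t.+1 = Vf (Hs t.+1) (K t.+1) by apply: funext; exact: V_unfold.
rewrite /Vgood eV.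
split; first by exists L => x; exact: (Vf_lb K0' HL).
split.
  exists (K t.+1); split => //; split; first exact: Kdec.
  move=> x x' xx'; exact: (Vf_mono K0' HL).
have [a ha] := Vf_left K0' HL hs co.
apply: ucc_ucl ha.
exact: Vf_ucc.
Qed.

Lemma Hgood_of_Vgood t : (t < T)%N -> Vgood t -> Hgood t.
Proof.
move=> tT [[LV hLV] [_ uV]].
have [cC coC] := Cconv tT.
have a0 : 0 <= alpha by case/andP: a01 => /ltW.
have hW := W_lb (Vint tT) hLV.
have uW := W_ucc (Dge tT) (Vint tT) uV.
split; first exact: (Hf_lb cC coC a0 hW).
split; first exact: (Hf_coer coC a0 hW).
split; first exact: (Hf_ucc cC coC a0 uW).
exact: (Hf_min cC coC a0 hW uW).
Qed.

Lemma all_good t : (t < T)%N -> Hgood t /\ Vgood t.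
Proof.
move=> tT.
have [k ek] : exists k, (t + k).+1 = T by exists (T - t.+1)%N; lia.
elim: k t tT ek => [|k IH] t tT ek.
  have hV : Vgood t by apply: Vgood_last => //; lia.
  by split => //; exact: Hgood_of_Vgood.
have t1T : (t.+1 < T)%N by lia.
have [hH _] := IH t.+1 t1T ltac:(lia).
have hV := Vgood_of_Hgood t1T hH.
by split => //; exact: Hgood_of_Vgood.
Qed.


Lemma final t : (t < T)%N -> 0 < theta ->
  Sstar T alpha c K G D t <= SU alpha c K G D theta t.
Proof.
move=> tT th0.
have [[[L HL] [co [uH [s hs]]]] [_ [[K' [K'0 [aK' Vmono]]] _]]] := all_good tT.
have [cC coC] := Cconv tT.
have Kt0 := K0 tT.
have a0 : 0 <= alpha by case/andP: a01 => /ltW.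
rewrite /Sstar /SU.
have infr : inf (range (Hs t)) = Hs t s.
  apply: inf_min; last by exists s.
  by move=> v [y _ <-]; exact: hs.
rewrite infr.
have [N HN] := co (Hs t s + 1).
have Alb : forall x, [set x | Hs t x = Hs t s] x -> - `|N| <= x.
  move=> x /= hx; have [Nx|Nx] := leP N `|x|.
    by have := HN x Nx; rewrite hx; lra.
  have := ler_norm N; have : - x <= `|x| by rewrite -normrN ler_norm.
  lra.
apply: le_trans (inf_le_elem Alb (erefl _)) _.
apply: lb_le_inf.
- pose q := Cm alpha c G D t / theta.
  pose n0 := (Num.ceil q - 1)%R.
  have hq : Cm alpha c G D t = q * theta by rewrite /q divfK // gt_eqF.
  have hn0a : zgrid theta n0 < Cm alpha c G D t.
    by rewrite /zgrid hq ltr_pM2r // /n0; exact: ceilB1_lt.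
  have hn0b : Cm alpha c G D t <= zgrid theta (n0 + 1).
    by rewrite /zgrid hq ler_pM2r // /n0 subrK; exact: ceil_ge.
  have [N2 HN2] := coC (Cf t (zgrid theta n0) + K t + 1).
  pose m := Num.ceil (Num.max N2 (Cm alpha c G D t) / theta).
  have hm : Num.max N2 (Cm alpha c G D t) <= zgrid theta m.
    rewrite /zgrid /m.
    have := ceil_ge (Num.max N2 (Cm alpha c G D t) / theta).
    rewrite -(ler_pM2r th0) divfK ?gt_eqF //.
  move: hm; rewrite ge_max => /andP[hm1 hm2].
  exists (zgrid theta m), m => //; split => //.
  exists n0; split; first by rewrite hn0a hn0b.
  have : N2 <= `|zgrid theta m| by apply: le_trans hm1 (ler_norm _).
  move/HN2; lra.
- move=> _ [m /= [hCm [n0 [/andP[hn1 hn2] hC]]] <-].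
  rewrite leNgt; apply/negP => hlt.
  have zz : zgrid theta n0 < zgrid theta m by apply: lt_le_trans hn1 hCm.
  have CC := conv_mid cC zz hlt ltac:(lra).
  have hz := hs (zgrid theta n0).
  have hW := W_mono (Vint tT) Vmono (ltW (lt_trans zz hlt)).
  move: hz; rewrite /Hstar; move: hW; rewrite /Wf.
  set Wz := Exp _ _; set Ws := Exp _ _.
  move=> hW hz.
  have := ler_wpM2l a0 hW; rewrite mulrDr.
  lra.
Qed.

End Main.

Unset Implicit Arguments.
Theorem lemma4p7 (R : realType) (d : measure_display) (Omega : measurableType d)
  (P : probability Omega R) (T : nat) (alpha : R) (c K : nat -> R)
  (G : nat -> R -> R) (D : nat -> {RV P >-> R}) (theta : R) :
  (2 <= T)%N ->
  0 < alpha <= 1 ->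
  (forall t, (t < T)%N -> 0 <= K t) ->
  (forall t, (t.+1 < T)%N -> alpha * K t.+1 <= K t) ->
  demands_independent T D ->
  (forall t, (t < T)%N -> forall w, 0 <= D t w) ->
  (forall t, (t < T)%N -> P.-integrable setT (EFin \o D t)) ->
  (forall t, (t < T)%N -> forall y : R,
     P.-integrable setT
       (fun w => (Vstar T alpha c K G D t.+1 (y - D t w))%:E)) ->
  (forall t, (t < T)%N ->
     convex_fun (Cfun alpha c G D t) /\ coercive (Cfun alpha c G D t)) ->
  0 < theta ->
  forall t, (t < T)%N ->
    Sstar T alpha c K G D t <= SU alpha c K G D theta t.
Proof.
move=> _ a01 K0 Kdec _ Dge _ Vint Cconv th0 t tT.
exact: (final a01 K0 Kdec Dge Vint Cconv tT th0).
Qed.
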